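(* Let $n\ge1$, $m\ge n$, and ${\sf A}_k(\mathbf u)$ as defined in the context. (i) For $\mathbf t=(t_0,\dots,t_m)$ put $h(\mathbf t;\mathbf u)=\sum_{k=0}^m t_k p_k(\mathbf u)$ and ${\sf H}(\mathbf t;\mathbf u)=\sum_{k=0}^m t_k{\sf A}_k(\mathbf u)$. Then ${\sf H}$ is upper triangular with $({\sf H})_{i,j}=\frac{\partial^{\,j-i}h}{\partial u_1^{\,j-i}}$ for $i\le j$, and the critical point equations $\frac{\partial\Phi}{\partial y_i}(\mathbf t;\mathbf u)=0$ ($i=1,\dots,n$) for $\Phi(\mathbf t;\mathbf y)=\sum_{k=0}^m t_kp_{k+1}(\mathbf y)$ hold if and only if ${\sf H}(\mathbf t;\mathbf u)=0$. (ii) For every $\mathbf u\in\mathbb C^n$, setting $t_i=(-1)^i e_{n-i}(\mathbf u)$ for $i=0,1,\dots,n$ and $t_k=0$ for $n<k\le m$ gives ${\sf H}(\mathbf t;\mathbf u)=0$, where $e_j(\mathbf u):=(-1)^j p_j(-\mathbf u)$.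
   Context: The elementary Schur polynomials $p_k(\mathbf u)$, $\mathbf u=(u_1,\dots,u_n)$, are defined by $\exp\big(\sum_{i=1}^n u_i z^i\big)=\sum_{k\ge 0}p_k(\mathbf u)z^k$, with $p_k=0$ for $k<0$. ${\sf A}_k(\mathbf u)$ is the $n\times n$ matrix with $({\sf A}_k)_{i,j}=p_{k-j+i}(\mathbf u)$ for $i\le j$ and $0$ for $i>j$. *)

(* Defs.v *)
From HB Require Import structures.
From mathcomp Require Import all_boot all_order all_algebra.
Set Implicit Arguments. Unset Strict Implicit. Unset Printing Implicit Defensive.
Import Order.TTheory GRing.Theory Num.Theory.
Local Open Scope ring_scope.

(* Elementary Schur polynomials, with coefficients u_1..u_n stored at indices
   0..n-1 and living in {poly R} (so that we can single out one variable).
   p_k(u) = coefficient of z^k in exp(sum_i u_i z^i)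
          = coefficient of z^k in sum_{j<=k} (sum_i u_i z^i)^j / j!
   (terms with j > k do not contribute to the z^k coefficient). *)
Definition schurP (R : numFieldType) (n k : nat) (u : 'I_n -> {poly R}) : {poly R} :=
  \sum_(j < k.+1)
     ((nat_of_ord j)`!%:R : R)^-1 *: ((\sum_(i < n) (u i)%:P * 'X^((nat_of_ord i).+1)) ^+ j)`_k.

Definition schur (R : numFieldType) (n k : nat) (u : 'I_n -> R) : R :=
  (schurP k (fun i => (u i)%:P)).[0].

Definition schurZ (R : numFieldType) (n : nat) (k : int) (u : 'I_n -> R) : R :=
  match k with Posz k' => schur k' u | Negz _ => 0 end.

Definition Amx (R : numFieldType) (n k : nat) (u : 'I_n -> R) : 'M[R]_n :=
  \matrix_(i, j) if (i <= j)%N then schurZ (k%:Z - (nat_of_ord j)%:Z + (nat_of_ord i)%:Z) u else 0.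

Definition Hmx (R : numFieldType) (n m : nat) (t : 'I_m.+1 -> R) (u : 'I_n -> R) : 'M[R]_n :=
  \sum_(k < m.+1) t k *: Amx k u.

Definition varpoly (R : numFieldType) (n : nat) (u : 'I_n -> R) (i : 'I_n) : 'I_n -> {poly R} :=
  fun j => if j == i then 'X else (u j)%:P.

(* h(t; u) as a polynomial in the variable u_i (other coordinates fixed to u) *)
Definition h_in (R : numFieldType) (n m : nat) (t : 'I_m.+1 -> R) (u : 'I_n -> R) (i : 'I_n)
  : {poly R} := \sum_(k < m.+1) t k *: schurP k (varpoly u i).

(* Phi(t; y) = sum_k t_k p_{k+1}(y), as a polynomial in y_i (others fixed to u) *)
Definition Phi_in (R : numFieldType) (n m : nat) (t : 'I_m.+1 -> R) (u : 'I_n -> R) (i : 'I_n)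
  : {poly R} := \sum_(k < m.+1) t k *: schurP k.+1 (varpoly u i).

Definition elem (R : numFieldType) (n j : nat) (u : 'I_n -> R) : R :=
  (-1) ^+ j * schur j (fun i => - u i).

(* Main.v *)
Require Import Defs.
From HB Require Import structures.
From mathcomp Require Import all_boot all_order all_algebra zify ring.
Import Order.TTheory GRing.Theory Num.Theory.
Local Open Scope ring_scope.

Module M_Sub1.
Set Implicit Arguments. Unset Strict Implicit.


Definition Wp (A : nzRingType) (n : nat) (u : 'I_n -> A) : {poly A} :=
  \sum_(i < n) (u i)%:P * 'X^((nat_of_ord i).+1).

Lemma Wp_val (A : comNzRingType) n (u : 'I_n -> A) j k :
  (k < j)%N -> ((Wp u) ^+ j)`_k = 0.
Proof.
move=> lt.
have -> : Wp u = 'X * \sum_(i < n) (u i)%:P * 'X^i.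
  rewrite /Wp mulr_sumr; apply: eq_bigr => i _.
  by rewrite exprS mulrCA.
by rewrite exprMn coefXnM lt.
Qed.

Definition cf (R : numFieldType) (j : nat) : R := (j`!%:R)^-1.

Lemma cfS (R : numFieldType) j : (cf R j.+1) * j.+1%:R = cf R j.
Proof.
rewrite /cf factS natrM invfM mulrAC mulVf ?mul1r //.
by rewrite pnatr_eq0.
Qed.

Lemma schurP_widen (R : numFieldType) n k N (u : 'I_n -> {poly R}) :
  (k < N)%N -> schurP k u = \sum_(j < N) cf R j *: ((Wp u) ^+ j)`_k.
Proof.
move=> kN; change (schurP k u) with (\sum_(j < k.+1) (fun j:nat => cf R j *: ((Wp u)^+j)`_k) j).
rewrite (big_ord_widen _ _ kN) big_mkcond /=.
apply: eq_bigr => j _; case: ifP => // /negbT; rewrite -leqNgt => h.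
by rewrite Wp_val ?scaler0.
Qed.

Definition schurR (R : numFieldType) n k (v : 'I_n -> R) : R :=
  \sum_(j < k.+1) cf R j * ((Wp v) ^+ j)`_k.

Lemma schurR_widen (R : numFieldType) n k N (u : 'I_n -> R) :
  (k < N)%N -> schurR k u = \sum_(j < N) cf R j * ((Wp u) ^+ j)`_k.
Proof.
move=> kN; change (schurR k u) with (\sum_(j < k.+1) (fun j:nat => cf R j * ((Wp u)^+j)`_k) j).
rewrite (big_ord_widen _ _ kN) big_mkcond /=.
apply: eq_bigr => j _; case: ifP => // /negbT; rewrite -leqNgt => h.
by rewrite Wp_val ?mulr0.
Qed.

Lemma schurP_eval (R : numFieldType) n k (u : 'I_n -> {poly R}) x :
  (schurP k u).[x] = schurR k (fun i => (u i).[x]).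
Proof.
rewrite /schurP /schurR horner_sum; apply: eq_bigr => j _.
rewrite hornerZ; congr (_ * _).
have -> : Wp (fun i => (u i).[x]) = map_poly (horner_eval x) (Wp u).
  rewrite /Wp rmorph_sum; apply: eq_bigr => i _.
  by rewrite rmorphM /= map_polyC rmorphXn /= map_polyX.
by rewrite -rmorphXn coef_map.
Qed.

Lemma schur_R (R : numFieldType) n k (u : 'I_n -> R) : schur k u = schurR k u.
Proof.
rewrite /schur schurP_eval /schurR.
have -> : Wp (fun i => ((u i)%:P).[0]) = Wp u by apply: eq_bigr => i _; rewrite hornerC.
by [].
Qed.

End M_Sub1.
Import M_Sub1.

Module M_Sub2.
Set Implicit Arguments. Unset Strict Implicit.


Section D.
Variable R : numFieldType.
Definition Dm (P : {poly {poly R}}) : {poly {poly R}} := map_poly (@deriv R) P.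

Lemma coefDm P k : (Dm P)`_k = (P`_k)^`().
Proof. by rewrite /Dm coef_map. Qed.

Lemma DmD P Q : Dm (P + Q) = Dm P + Dm Q.
Proof. by apply/polyP => k; rewrite coefD !coefDm coefD derivD. Qed.

Lemma DmM P Q : Dm (P * Q) = Dm P * Q + P * Dm Q.
Proof.
apply/polyP => k; rewrite coefD coefDm !coefM raddf_sum -big_split /=.
by apply: eq_bigr => i _; rewrite derivM !coefDm.
Qed.

Lemma Dm1 : Dm 1 = 0.
Proof. by apply/polyP => k; rewrite coefDm coef1 coef0; case: (k == 0)%N; rewrite ?derivC // -polyC1 derivC. Qed.

Lemma DmX P j : Dm (P ^+ j.+1) = P ^+ j * Dm P *+ j.+1.
Proof.
elim: j => [|j IH]; first by rewrite expr1 expr0 mul1r.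
rewrite exprS DmM IH exprS.
rewrite mulrnAr -mulrnAl [RHS]mulrS; congr (_ + _); first by rewrite mulrC.
by rewrite mulrnAl mulrA.
Qed.
End D.

Section D2.
Variable R : numFieldType.
Variables (n : nat) (u : 'I_n -> {poly R}) (i : 'I_n).
Hypothesis hu : forall l, (u l)^`() = (l == i)%:R.

Lemma DmW : Dm (Wp u) = 'X^(i.+1).
Proof.
apply/polyP => k; rewrite coefDm coefXn /Wp coef_sum raddf_sum /=.
rewrite (bigD1 i) //= big1 ?addr0.
  by rewrite coefCM coefXn; case: (k == i.+1); rewrite ?mulr1 ?mulr0 ?hu ?eqxx ?raddf0.
move=> l /negbTE hl; rewrite coefCM coefXn.
by case: (k == l.+1); rewrite ?mulr1 ?mulr0 ?hu ?hl ?raddf0.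
Qed.

Lemma deriv_schurP k :
  (schurP k u)^`() = if (i < k)%N then schurP (k - i.+1) u else 0.
Proof.
rewrite [X in X^`()]/schurP raddf_sum /= big_ord_recl /= derivZ -coefDm expr0 Dm1 coef0 scaler0 add0r.
under eq_bigr => j _ do rewrite derivZ -coefDm DmX DmW coefMn coefMXn.
case: ifP => ik; last first.
  by apply: big1 => j _; rewrite ltnNge ik /= mul0rn scaler0.
rewrite (schurP_widen (N:=k)); last by move: ik; clear; lia.
apply: eq_bigr => j _; rewrite ltnNge ik /=.
rewrite -scalerMnr -scaler_nat scalerA.
by congr (_ *: _); rewrite mulrC; exact: cfS.
Qed.
End D2.

Lemma schurR_ext (R : numFieldType) n k (v w : 'I_n -> R) :
  (forall l, v l = w l) -> schurR k v = schurR k w.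
Proof.
move=> h; rewrite /schurR.
have -> : Wp v = Wp w by apply: eq_bigr => l _; rewrite h.
by [].
Qed.

Lemma varpoly_deriv (R : numFieldType) n (u : 'I_n -> R) i l :
  (varpoly u i l)^`() = (l == i)%:R.
Proof. by rewrite /varpoly; case: (l == i); rewrite ?derivX ?derivC. Qed.

Lemma schurP_vp_eval (R : numFieldType) n (u : 'I_n -> R) i k :
  (schurP k (varpoly u i)).[u i] = schur k u.
Proof.
rewrite schurP_eval schur_R; apply: schurR_ext => l.
by rewrite /varpoly; case: eqP => [->|_]; rewrite ?hornerX ?hornerC.
Qed.

Lemma schurZ_neg (R : numFieldType) n (z : int) (u : 'I_n -> R) :
  (z < 0)%R -> schurZ z u = 0.
Proof. by case: z. Qed.

Lemma schurZ_sub (R : numFieldType) n k r (u : 'I_n -> R) :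
  schurZ (k%:Z - r%:Z) u = if (r <= k)%N then schur (k - r) u else 0.
Proof.
case: ifP => h.
  by rewrite subzn.
apply: schurZ_neg; rewrite subr_lt0 ltz_nat ltnNge h //.
Qed.

Lemma derivn_schurP (R : numFieldType) n (u : 'I_n -> R) i (i0 : nat_of_ord i = 0%N) r k :
  (schurP k (varpoly u i))^`(r) = if (r <= k)%N then schurP (k - r) (varpoly u i) else 0.
Proof.
elim: r k => [|r IH] k; first by rewrite derivn0 subn0.
rewrite derivSn (@deriv_schurP _ _ _ i); last exact: varpoly_deriv.
rewrite i0; case: k => [|k] /=; first by rewrite raddf0.
by rewrite IH subn1 /= subSS.
Qed.

End M_Sub2.
Import M_Sub2.

Module M_Sub3.
Set Implicit Arguments. Unset Strict Implicit.


Section E.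
Variable R : numFieldType.
Definition E N (V : {poly R}) : {poly R} := \sum_(j < N) cf R j *: V ^+ j.

Lemma E_deriv N V : (E N.+1 V)^`() = V^`() * E N V.
Proof.
rewrite /E raddf_sum /= big_ord_recl /= derivZ expr0 derivC scaler0 add0r.
rewrite mulr_sumr; apply: eq_bigr => j _.
rewrite derivZ deriv_exp /= -scalerMnr -scaler_nat scalerA scalerAr.
have -> : ((bump 0 j)%:R * cf R (bump 0 j)) = cf R j by rewrite mulrC; exact: cfS.
by rewrite add0n.
Qed.

Lemma E_S N V : E N.+1 V = E N V + cf R N *: V ^+ N.
Proof. by rewrite /E big_ord_recr. Qed.

Lemma E_prod N (V : {poly R}) : (forall j i, (i < j)%N -> (V ^+ j)`_i = 0) ->
  forall c, (0 < c)%N -> (c <= N)%N -> (E N.+1 V * E N.+1 (- V))`_c = 0.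
Proof.
move=> hV c c0 cN.
set P := E N.+1 V * E N.+1 (- V).
have hP : P^`() = V ^+ N * (V^`() * (cf R N)%:P * ((-1) ^+ N * E N V - E N (- V))).
  rewrite /P derivM !E_deriv derivN.
  rewrite !E_S -!mul_polyC [(- V) ^+ N]exprNn.
  ring.
have hk : forall k, (k < N)%N -> P^`()`_k = 0.
  move=> k kN; rewrite hP coefM big1 // => j _.
  by rewrite hV ?mul0r //; move: (ltn_ord j) kN; clear; lia.
have := hk c.-1; rewrite coef_deriv prednK //.
have h1 : (c.-1 < N)%N by move: c0 cN; clear; lia.
move=> /(_ cN) /eqP; rewrite mulrn_eq0 => /orP [|/eqP //].
by move: c0; clear; case: c.
Qed.
End E.

Lemma schurR_E (R : numFieldType) n (u : 'I_n -> R) b N :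
  (b < N)%N -> schurR b u = (E N (Wp u))`_b.
Proof.
move=> bN; rewrite (schurR_widen (N:=N)) // /E coef_sum.
by apply: eq_bigr => j _; rewrite coefZ.
Qed.

Lemma schur_conv (R : numFieldType) n (u : 'I_n -> R) c : (0 < c)%N ->
  \sum_(b < c.+1) schur b u * schur (c - b) (fun i => - u i) = 0.
Proof.
move=> c0.
have hW : Wp (fun i => - u i) = - Wp u.
  by rewrite /Wp -sumrN; apply: eq_bigr => i _; rewrite polyCN mulNr.
transitivity ((E c.+1 (Wp u) * E c.+1 (- Wp u))`_c); last first.
  exact: (@E_prod _ c (Wp u) (fun j i => @Wp_val _ _ u j i) c).
rewrite coefM; apply: eq_bigr => b _.
rewrite !schur_R (@schurR_E _ _ _ _ c.+1) // (@schurR_E _ _ _ _ c.+1) ?hW //.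
by rewrite ltnS leq_subr.
Qed.

End M_Sub3.
Import M_Sub3.

Module M_Sub4.
Set Implicit Arguments. Unset Strict Implicit.


Definition S (R : numFieldType) n m (t : 'I_m.+1 -> R) (u : 'I_n -> R) (d : nat) : R :=
  \sum_(k < m.+1) t k * schurZ (k%:Z - d%:Z) u.

Lemma Hmx_entry (R : numFieldType) n m (t : 'I_m.+1 -> R) (u : 'I_n -> R) i j :
  Hmx t u i j = if (i <= j)%N then S t u (j - i) else 0.
Proof.
rewrite /Hmx summxE /S; case: ifP => h.
  apply: eq_bigr => k _; rewrite !mxE h; congr (_ * schurZ _ _).
  by rewrite -subzn //; ring.

by apply: big1 => k _; rewrite !mxE h mulr0.
Qed.

Lemma h_in_deriv (R : numFieldType) n m (t : 'I_m.+1 -> R) (u : 'I_n -> R) i r :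
  nat_of_ord i = 0%N -> (h_in t u i)^`(r).[u i] = S t u r.
Proof.
move=> i0; rewrite /h_in raddf_sum horner_sum; apply: eq_bigr => k _.
rewrite /= derivnZ hornerZ /= (derivn_schurP _ i0) schurZ_sub; case: ifP => _.
  by rewrite schurP_vp_eval.
by rewrite horner0.
Qed.

Lemma Phi_deriv (R : numFieldType) n m (t : 'I_m.+1 -> R) (u : 'I_n -> R) i :
  (Phi_in t u i)^`().[u i] = S t u i.
Proof.
rewrite /Phi_in raddf_sum horner_sum; apply: eq_bigr => k _.
rewrite /= derivZ hornerZ (@deriv_schurP _ _ _ i); last exact: varpoly_deriv.
rewrite schurZ_sub ltnS; case: ifP => _.
  by rewrite schurP_vp_eval subSS.
by rewrite horner0.
Qed.

Lemma part2 (R : numFieldType) n m (hnm : (n <= m)%N) (u : 'I_n -> R) d : (d < n)%N ->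
  S (fun k : 'I_m.+1 => if (k <= n)%N then (-1) ^+ k * elem (n - k) u else 0) u d = 0.
Proof.
move=> dn.
pose F (k : nat) : R := if (d <= k <= n)%N then
   (-1) ^+ n * (schur (n - k) (fun i => - u i) * schur (k - d) u) else 0.
transitivity (\sum_(k < m.+1) F k).
  apply: eq_bigr => k _; rewrite /F schurZ_sub /elem.
  case: (leqP k n) => kn; case: (leqP d k) => dk /=; rewrite ?mul0r ?mulr0 //.
  by rewrite mulrA -exprD subnKC // mulrA.
have hn1 : (n.+1 <= m.+1)%N by [].
transitivity (\sum_(k < n.+1) F k).
  rewrite [RHS](big_ord_widen m.+1 F hn1) [RHS]big_mkcond; apply: eq_bigr => k _.
  by case: ifP => // /negbT; rewrite -leqNgt /F => h; case: ifP => //; move: h; clear; lia.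
rewrite -(big_mkord xpredT F) (@big_cat_nat _ _ _ d) /=; last by move: dn; clear; lia.
rewrite big_nat_cond big1 ?add0r; last first.
  by move=> k /andP[/andP[_ kd] _]; rewrite /F leqNgt kd.
rewrite -{1}(add0n d) big_addn subSn ?(ltnW dn) // big_mkord.
transitivity ((-1) ^+ n * \sum_(b < (n - d).+1) schur b u * schur ((n - d) - b) (fun i => - u i)).
  rewrite mulr_sumr; apply: eq_bigr => b _.
  have hb := ltn_ord b.
  rewrite /F ifT; last by move: hb dn; clear; lia.
  have -> : (n - (b + d) = n - d - b)%N by move: hb dn; clear; lia.
  by rewrite addnK; ring.
by rewrite schur_conv ?mulr0 ?subn_gt0.
by [].
Qed.

End M_Sub4.
Import M_Sub4.


Theorem mainTheorem5 (R : numFieldType) (n m : nat) (hn : (0 < n)%N) (hnm : (n <= m)%N) :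
  (forall (t : 'I_m.+1 -> R) (u : 'I_n -> R),
     (forall i j : 'I_n, (j < i)%N -> Hmx t u i j = 0) /\
     (forall i j : 'I_n, (i <= j)%N ->
        Hmx t u i j = (h_in t u (Ordinal hn))^`((j - i)%N).[u (Ordinal hn)]) /\
     ((forall i : 'I_n, (Phi_in t u i)^`().[u i] = 0) <-> Hmx t u = 0)) /\
  (forall u : 'I_n -> R,
     Hmx (fun k : 'I_m.+1 => if (k <= n)%N then (-1) ^+ k * elem (n - k) u else 0) u = 0).
Proof.
split.
  move=> t u; split; [|split].
  - by move=> i j ji; rewrite Hmx_entry leqNgt ji.
  - by move=> i j ij; rewrite Hmx_entry ij h_in_deriv.
  - split.
      move=> h; apply/matrixP => i j; rewrite Hmx_entry mxE; case: ifP => // ij.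
      have hji : (j - i < n)%N by have := ltn_ord j; clear; lia.
      by have := h (Ordinal hji); rewrite Phi_deriv.
    move=> /matrixP H i; rewrite Phi_deriv.
    by have := H (Ordinal hn) i; rewrite Hmx_entry mxE /= subn0.
move=> u; apply/matrixP => i j; rewrite Hmx_entry mxE; case: ifP => // ij.
by apply: part2 => //; have := ltn_ord j; clear; lia.
Qed.
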